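(* Let $G$ be a finite graph and $H=(H_{ij})$ a matrix indexed by its vertices with $H_{ij}\ge0$, $H_{ij}=0$ unless $\langle ij\rangle$ is an edge, and $H_{ij}\le h$ for all edges. Suppose every vertex has degree at most $\lambda$. Let $G_{ij}(t)=[e^{Ht}]_{ij}$ and let $d_{ij}$ be the graph distance between vertices $i$ and $j$. Then for all vertices $i,j$ with $d_{ij}\ge1$ and all $0\le t<d_{ij}/(\lambda h e)$, $$G_{ij}(t)\le\left(\frac{\lambda h t e}{d_{ij}}\right)^{d_{ij}}\frac{1/e}{1-\lambda h t e/d_{ij}}.$$ *)

(* Defs.v *)
From HB Require Import structures.
From mathcomp Require Import all_boot all_order all_algebra.
From mathcomp Require Import all_classical all_reals all_analysis.
Set Implicit Arguments. Unset Strict Implicit. Unset Printing Implicit Defensive.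
Import Order.TTheory GRing.Theory Num.Theory.
Local Open Scope ring_scope.

Definition simple_graph (n : nat) (e : rel 'I_n) : Prop :=
  symmetric e /\ irreflexive e.

Definition degree (n : nat) (e : rel 'I_n) (i : 'I_n) : nat :=
  #|[set j | e i j]|.

Definition walk_of_length (n : nat) (e : rel 'I_n) (k : nat) (i j : 'I_n) : Prop :=
  exists p : seq 'I_n, [/\ size p = k, path e i p & last i p = j].

Definition graph_dist (n : nat) (e : rel 'I_n) (i j : 'I_n) (d : nat) : Prop :=
  walk_of_length e d i j /\ (forall k, (k < d)%N -> ~ walk_of_length e k i j).

Definition expmx_entry (R : realType) (n : nat) (H : 'M[R]_n) (t : R)
    (i j : 'I_n) : R :=
  limn (fun N : nat => \sum_(k < N) (t ^+ k / (k`!)%:R) * (H ^+ k) i j).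

(* Main.v *)
Require Import Defs.
From HB Require Import structures.
From mathcomp Require Import all_boot all_order all_algebra.
From mathcomp Require Import all_classical all_reals all_analysis.
From mathcomp Require Import ring lra.
Import Order.TTheory GRing.Theory Num.Theory.
Local Open Scope ring_scope.

Lemma one_plus_inv_pow (R : realType) (k : nat) : (0 < k)%N ->
  (1 + (k%:R : R)^-1) ^+ k <= expR 1.
Proof.
move=> k0.
have -> : (expR 1 : R) = expR ((k%:R)^-1) ^+ k.
  by rewrite -expRM_natl mulfV // pnatr_eq0 -lt0n.
rewrite lerXn2r ?nnegrE ?expR_ge0 //.

exact: expR_ge1Dx.
Qed.

Lemma fact_bound (R : realType) (k : nat) : (0 < k)%N ->
  (k%:R : R) ^+ k <= k`!%:R * expR 1 ^+ k.-1.
Proof.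
elim: k => [//|k IH] _.
case: k IH => [|k] IH; first by rewrite expr1 expr0 mulr1.
have {}IH := IH isT.
rewrite factS natrM /= exprS.
have kp : (0 : R) < k.+1%:R by rewrite ltr0n.
have step : (k.+2%:R : R) ^+ k.+1 <= k.+1%:R ^+ k.+1 * expR 1.
  have -> : (k.+2%:R : R) = k.+1%:R * (1 + k.+1%:R^-1).
    by rewrite mulrDr mulr1 mulfV ?gt_eqF // -natr1.
  rewrite exprMn; apply: ler_wpM2l; first by rewrite exprn_ge0 ?ltW.
  exact: one_plus_inv_pow.
rewrite -mulrA; apply: ler_wpM2l; first by rewrite ler0n.
apply: (le_trans step).
rewrite [expR 1 ^+ _]exprSr mulrA; apply: ler_wpM2r; first by rewrite expR_ge0.
exact: IH.
Qed.

Lemma term_bound (R : realType) (x : R) (k d : nat) : 0 <= x -> (1 <= d)%N ->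
  (d <= k)%N -> x ^+ k / k`!%:R <= (expR 1)^-1 * (x * expR 1 / d%:R) ^+ k.
Proof.
move=> x0 d1 dk.
have k1 : (0 < k)%N by apply: leq_trans dk.
have e0 : (0 : R) < expR 1 by apply: expR_gt0.
have kp : (0 : R) < k%:R by rewrite ltr0n.
have dp : (0 : R) < d%:R by rewrite ltr0n.
have fp : (0 : R) < k`!%:R by rewrite ltr0n fact_gt0.
apply: (@le_trans _ _ ((expR 1)^-1 * (x * expR 1 / k%:R) ^+ k)); last first.
  apply: ler_wpM2l; first by rewrite invr_ge0 ltW.
  have e0' := ltW e0; have k0' := ltW kp; have d0' := ltW dp.
  apply: lerXn2r; rewrite ?nnegrE ?divr_ge0 ?mulr_ge0 //.
  apply: ler_wpM2l; first by rewrite mulr_ge0.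
  by rewrite lef_pV2 ?posrE // ler_nat.
have -> : (expR 1)^-1 * (x * expR 1 / k%:R) ^+ k
    = x ^+ k * (expR 1 ^+ k.-1 / k%:R ^+ k).
  rewrite !exprMn exprVn.
  case: k k1 {dk kp fp} => [//|k] _ /=.
  rewrite [expR 1 ^+ _.+1]exprS; field.
  by rewrite gt_eqF //= ?expR_gt0 ?pnatr_eq0.
apply: ler_wpM2l; first by rewrite exprn_ge0.
rewrite ler_pdivlMr ?exprn_gt0 // mulrC ler_pdivrMr // mulrC.
exact: fact_bound.
Qed.
Lemma rowsum_le (R : realType) (n : nat) (e : rel 'I_n) (H : 'M[R]_n) (h : R) (lam : nat) :
  0 <= h ->
  (forall i j, ~~ e i j -> H i j = 0) ->
  (forall i j, e i j -> H i j <= h) ->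
  (forall i, (degree e i <= lam)%N) ->
  forall i, \sum_l H i l <= lam%:R * h.
Proof.
move=> h0 Hz Hh Hd i.
rewrite (bigID (fun l => e i l)) /= [X in _ + X]big1 ?addr0; last first.
  by move=> l /Hz.
apply: (@le_trans _ _ (\sum_(l | e i l) h)); first by apply: ler_sum => l /Hh.
rewrite sumr_const -[h *+ _]mulr_natl; apply: ler_wpM2r => //.
rewrite ler_nat; apply: leq_trans (Hd i).
by rewrite /degree cardsE.
Qed.

Lemma mx_pow_ge0 (R : realType) (n : nat) (H : 'M[R]_n) :
  (forall i j, 0 <= H i j) -> forall k i j, 0 <= (H ^+ k) i j.
Proof.
move=> H0; elim=> [|k IH] i j.
  by rewrite expr0 mxE ler0n.
rewrite exprS -mulmxE mxE; apply: sumr_ge0 => l _; exact: mulr_ge0.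
Qed.

Lemma mx_pow_le (R : realType) (n : nat) (H : 'M[R]_n) (a : R) :
  (forall i j, 0 <= H i j) -> (forall i, \sum_l H i l <= a) ->
  forall k i j, (H ^+ k) i j <= a ^+ k.
Proof.
move=> H0 Hs; elim=> [|k IH] i j.
  by rewrite expr0 mxE expr0 lern1 leq_b1.
rewrite exprS -mulmxE mxE.
apply: (@le_trans _ _ (\sum_l H i l * a ^+ k)).
  by apply: ler_sum => l _; apply: ler_wpM2l.
rewrite -mulr_suml exprS; apply: ler_wpM2r => //.
exact: (le_trans (@mx_pow_ge0 _ _ H H0 k i j) (IH i j)).
Qed.

Lemma mx_pow_walk (R : realType) (n : nat) (e : rel 'I_n) (H : 'M[R]_n) :
  (forall i j, ~~ e i j -> H i j = 0) ->
  forall k i j, (H ^+ k) i j != 0 -> walk_of_length e k i j.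
Proof.
move=> Hz; elim=> [|k IH] i j.
  rewrite expr0 mxE; case: (eqVneq i j) => [-> _|_]; first by exists [::].
  by rewrite eqxx.
rewrite exprS -mulmxE mxE => Hne.
have [l Hl] : exists l, H i l * (H ^+ k) l j != 0.
  apply/existsP; apply: contraR Hne; rewrite negb_exists => /forallP Hall.
  by apply/eqP/big1 => l _; apply/eqP; move: (Hall l); rewrite negbK.
rewrite mulf_eq0 negb_or in Hl; case/andP: Hl => Hil Hlj.
have eil : e i l by apply: contraR Hil => /Hz ->.
have [p [sp pp lp]] := IH _ _ Hlj.
exists (l :: p); split => /=; by [rewrite sp | rewrite eil | ].
Qed.
Lemma geom_id (R : realType) (r : R) (d : nat) : r < 1 -> forall N,
  \sum_(k < N) (if (d <= k)%N then r ^+ k else 0) + r ^+ (maxn N d) / (1 - r)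
  = r ^+ d / (1 - r).
Proof.
move=> r1; have r1' : 1 - r != 0 by rewrite subr_eq0 gt_eqF.
elim=> [|N IH]; first by rewrite big_ord0 add0r max0n.
rewrite big_ord_recr /=.
case: (leqP d N) => dN.
  have -> : maxn N.+1 d = N.+1 by apply/maxn_idPl; apply: leqW.
  move/maxn_idPl: dN IH => -> <-.
  rewrite -addrA; congr (_ + _).
  rewrite exprSr; field.
  by rewrite r1'.
have -> : maxn N.+1 d = d by apply/maxn_idPr.
have Nd : (N <= d)%N by apply: ltnW.
by move/maxn_idPr: Nd IH => ->; rewrite addr0.
Qed.

Lemma geom_le (R : realType) (r : R) (d : nat) : 0 <= r -> r < 1 -> forall N,
  \sum_(k < N) (if (d <= k)%N then r ^+ k else 0) <= r ^+ d / (1 - r).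
Proof.
move=> r0 r1 N; rewrite -(@geom_id _ r d r1 N) lerDl.
by rewrite divr_ge0 ?exprn_ge0 // subr_ge0 ltW.
Qed.

Theorem mainTheorem3 (R : realType) (n : nat) (e : rel 'I_n)
  (H : 'M[R]_n) (h : R) (lam : nat) :
  simple_graph e ->
  (forall i j, 0 <= H i j) ->
  (forall i j, ~~ e i j -> H i j = 0) ->
  (forall i j, e i j -> H i j <= h) ->
  (forall i, (degree e i <= lam)%N) ->
  forall (i j : 'I_n) (d : nat) (t : R),
    graph_dist e i j d -> (1 <= d)%N ->
    0 <= t -> t < d%:R / (lam%:R * h * expR 1) ->
    expmx_entry H t i j <=
      (lam%:R * h * t * expR 1 / d%:R) ^+ d
      * ((expR 1)^-1 / (1 - lam%:R * h * t * expR 1 / d%:R)).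
Proof.
move=> _ H0 Hz Hh Hd i j d t [_ Hdist] d1 t0 tlt.
set E := expR 1.
have e0 : (0 : R) < E by apply: expR_gt0.
have dp : (0 : R) < d%:R by rewrite ltr0n.
set a := lam%:R * h.
have ae0 : 0 < a * E.
  have : 0 < d%:R / (a * E) by apply: le_lt_trans tlt.
  by rewrite pmulr_rgt0 // invr_gt0.
have a0 : 0 < a by rewrite -(pmulr_lgt0 _ e0).
have h0 : 0 <= h.
  move: a0; rewrite /a; case: (lam) => [|l]; first by rewrite mul0r ltxx.
  by rewrite pmulr_rgt0 ?ltr0n // => /ltW.
set r := a * t * E / d%:R.
have r0 : 0 <= r by rewrite divr_ge0 ?mulr_ge0 ?(ltW a0) ?(ltW e0) ?(ltW dp).
have r1 : r < 1.
  rewrite /r ltr_pdivrMr // mul1r -mulrA [t * E]mulrC mulrA.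
  by rewrite mulrC -ltr_pdivlMr.
have rs := @rowsum_le R n e H h lam h0 Hz Hh Hd.
set S := fun N : nat => \sum_(k < N) (t ^+ k / (k`!)%:R) * (H ^+ k) i j.
have termge0 : forall k, 0 <= (t ^+ k / (k`!)%:R) * (H ^+ k) i j.
  move=> k; rewrite mulr_ge0 ?divr_ge0 ?exprn_ge0 ?ler0n //.
  exact: mx_pow_ge0.
have termle : forall k : nat, (t ^+ k / (k`!)%:R) * (H ^+ k) i j
    <= E^-1 * (if (d <= k)%N then r ^+ k else 0).
  move=> k; case: (leqP d k) => dk; last first.
    have -> : (H ^+ k) i j = 0.
      apply/eqP; apply: contraT => /(@mx_pow_walk R n e H Hz k i j) W.
      by case: (Hdist k dk W).
    by rewrite !mulr0.
  apply: (@le_trans _ _ ((a * t) ^+ k / k`!%:R)); last first.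
    rewrite /r.
    apply: term_bound => //; first by rewrite mulr_ge0 // ltW.
  rewrite exprMn mulrC -mulrA; apply: ler_wpM2r.
    by rewrite divr_ge0 ?exprn_ge0 ?ler0n.
  exact: mx_pow_le.
have SB : forall N, S N <= r ^+ d * (E^-1 / (1 - r)).
  move=> N; rewrite /S.
  apply: (@le_trans _ _ (\sum_(k < N) E^-1 * (if (d <= k)%N then r ^+ k else 0))).
    by apply: ler_sum => k _; apply: termle.
  rewrite -mulr_sumr mulrA [r ^+ d * _]mulrC -mulrA.
  apply: ler_wpM2l; first by rewrite invr_ge0 ltW.
  exact: geom_le.
have Snd : nondecreasing_seq S.
  apply/nondecreasing_seqP => N; rewrite /S big_ord_recr /= lerDl.
  exact: termge0.
have Scv : cvgn S.
  apply: nondecreasing_is_cvgn => //.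
  by exists (r ^+ d * (E^-1 / (1 - r))) => _ [N _ <-].
rewrite /expmx_entry -/S.
apply: limr_le => //.
by apply: nearW.
Qed.
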